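(* A topological group $X$ is Choquet if and only if its Raikov completion $\bar X$ is Choquet and $X$ is $G_\delta$-dense in $\bar X$.
   Context: Topological groups are assumed Hausdorff; the Raikov completion $\bar X$ of $X$ is its completion with respect to the two-sided uniformity, a complete topological group containing $X$ as a dense subgroup. The Choquet game $\mathsf{G}_{EN}(X)$ on a topological space $X$ is played by players $\mathsf E$ and $\mathsf N$: $\mathsf E$ starts by choosing a non-empty open set $U_0\subset X$, $\mathsf N$ responds with a non-empty open $U_1\subset U_0$, and at the $n$-th inning $\mathsf E$ chooses a non-empty open $U_{2n}\subset U_{2n-1}$ and $\mathsf N$ responds with a non-empty open $U_{2n+1}\subset U_{2n}$. Player $\mathsf E$ wins if $\bigcap_{n\in\omega}U_n=\emptyset$; otherwise $\mathsf N$ wins. A topological space $X$ is Choquet if player $\mathsf N$ has a winning strategy in $\mathsf{G}_{EN}(X)$. A subset $A$ of a topological space $Y$ is $G_\delta$-dense in $Y$ if $A$ meets every non-empty $G_\delta$-subset of $Y$. *)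

(* Defs.v *)
From Stdlib Require Import List Arith Classical.

Set Implicit Arguments.

Definition set (T : Type) := T -> Prop.

Record Topology (T : Type) := {
  open : set T -> Prop;
  open_full : open (fun _ => True);
  open_inter : forall A B, open A -> open B -> open (fun x => A x /\ B x);
  open_union : forall F : set (set T),
      (forall A, F A -> open A) -> open (fun x => exists A, F A /\ A x)
}.

Arguments open {T} t A.

Definition hausdorff {T : Type} (t : Topology T) : Prop :=
  forall x y : T, x <> y ->
    exists U V, open t U /\ open t V /\ U x /\ V y /\ (forall z, U z -> V z -> False).

Record TopGroup := {
  tg_car :> Type;
  tg_mul : tg_car -> tg_car -> tg_car;
  tg_inv : tg_car -> tg_car;
  tg_one : tg_car;
  tg_assoc : forall x y z, tg_mul x (tg_mul y z) = tg_mul (tg_mul x y) z;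
  tg_mul1 : forall x, tg_mul tg_one x = x;
  tg_mulV : forall x, tg_mul (tg_inv x) x = tg_one;
  tg_top : Topology tg_car;
  tg_mul_cont : forall x y (W : set tg_car), open tg_top W -> W (tg_mul x y) ->
      exists U V, open tg_top U /\ open tg_top V /\ U x /\ V y /\
        (forall a b, U a -> V b -> W (tg_mul a b));
  tg_inv_cont : forall W, open tg_top W -> open tg_top (fun x => W (tg_inv x));
  tg_hausdorff : hausdorff tg_top
}.

Arguments tg_mul {t}.
Arguments tg_inv {t}.
Arguments tg_one {t}.

Definition is_filter {T : Type} (F : set (set T)) : Prop :=
  F (fun _ => True) /\
  ~ F (fun _ => False) /\
  (forall A B, F A -> (forall x, A x -> B x) -> F B) /\
  (forall A B, F A -> F B -> F (fun x => A x /\ B x)).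

Definition two_sided_cauchy {G : TopGroup} (F : set (set G)) : Prop :=
  forall U : set G, open (tg_top G) U -> U tg_one ->
    exists A, F A /\ forall x y, A x -> A y ->
      U (tg_mul (tg_inv x) y) /\ U (tg_mul y (tg_inv x)).

Definition filter_converges {G : TopGroup} (F : set (set G)) : Prop :=
  exists p : G, forall U, open (tg_top G) U -> U p -> F U.

(** Raikov complete = complete with respect to the two-sided uniformity. *)
Definition raikov_complete (G : TopGroup) : Prop :=
  forall F : set (set G), is_filter F -> two_sided_cauchy F -> filter_converges F.

(** The Raikov completion is unique up to isomorphism over X. *)
Definition is_raikov_completion (X Y : TopGroup) (j : X -> Y) : Prop :=
  (forall a b, j (tg_mul a b) = tg_mul (j a) (j b)) /\
  (forall a b, j a = j b -> a = b) /\
  (forall B, open (tg_top Y) B -> open (tg_top X) (fun x => B (j x))) /\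
  (forall A, open (tg_top X) A ->
      exists B, open (tg_top Y) B /\ forall x, A x <-> B (j x)) /\
  (forall B, open (tg_top Y) B -> (exists y, B y) -> exists x, B (j x)) /\
  raikov_complete Y.

(** A play is a sequence U : nat -> set T; moves with
    even index are E's, odd index are N's. *)
Definition legal_move {T : Type} (t : Topology T) (U : nat -> set T) (k : nat) : Prop :=
  open t (U k) /\ (exists x, U k x) /\
  (forall x, 0 < k -> U k x -> U (k - 1) x).

(** Strategies of player N: a function of the history U_0, ..., U_(2n). *)
Definition strategy (T : Type) := list (set T) -> set T.

Definition history {T : Type} (U : nat -> set T) (m : nat) : list (set T) :=
  map U (seq 0 m).

Definition follows_upto {T : Type} (s : strategy T) (U : nat -> set T) (m : nat) : Prop :=
  forall n, 2 * n + 1 < m -> U (2 * n + 1) = s (history U (2 * n + 1)).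

Definition winning_N {T : Type} (t : Topology T) (s : strategy T) : Prop :=
  (forall (U : nat -> set T) (n : nat),
      (forall k, k <= 2 * n -> legal_move t U k) ->
      follows_upto s U (2 * n + 1) ->
      let V := s (history U (2 * n + 1)) in
      open t V /\ (exists x, V x) /\ (forall x, V x -> U (2 * n) x)) /\
  (forall U : nat -> set T,
      (forall k, legal_move t U k) ->
      (forall n, U (2 * n + 1) = s (history U (2 * n + 1))) ->
      exists x, forall k, U k x).

Definition choquet {T : Type} (t : Topology T) : Prop :=
  exists s : strategy T, winning_N t s.

Definition Gdelta_dense {T : Type} (t : Topology T) (A : set T) : Prop :=
  forall V : nat -> set T, (forall n, open t (V n)) ->
    (exists y, forall n, V n y) -> exists y, A y /\ forall n, V n y.

(* Main.v *)
Require Import Defs.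
From Stdlib Require Import List Arith Lia Classical FunctionalExtensionality PropExtensionality ClassicalEpsilon.
Import ListNotations.

Lemma set_ext {T} (A B : set T) : (forall x, A x <-> B x) -> A = B.
Proof. intros H; apply functional_extensionality; intro x; apply propositional_extensionality; auto. Qed.

Lemma open_ext {T} (t : Topology T) (A B : set T) :
  (forall x, A x <-> B x) -> open t A -> open t B.
Proof. intros H HA; rewrite <- (set_ext A B H); exact HA. Qed.

Lemma open_local {T} (t : Topology T) (A : set T) :
  (forall x, A x -> exists U, open t U /\ U x /\ forall z, U z -> A z) -> open t A.
Proof.
  intros H.
  apply open_ext with (A := fun x => exists U, (open t U /\ forall z, U z -> A z) /\ U x).
  - intro x; split.
    + intros [U [[_ HU] Ux]]; auto.
    + intros Ax; destruct (H x Ax) as [U [HU [Ux Hz]]]; exists U; auto.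
  - apply open_union. intros U [HU _]; exact HU.
Qed.

Lemma mulg_cancel (G : TopGroup) (a x z : G) : tg_mul a x = tg_mul a z -> x = z.
Proof.
  intros H. rewrite <- (tg_mul1 G x), <- (tg_mul1 G z), <- (tg_mulV G a).
  rewrite <- !tg_assoc, H. reflexivity.
Qed.

Lemma mulgV (G : TopGroup) (x : G) : tg_mul x (tg_inv x) = tg_one.
Proof.
  set (e := tg_mul x (tg_inv x)).
  assert (He : tg_mul e e = e).
  { unfold e. rewrite <- tg_assoc. rewrite (tg_assoc G (tg_inv x)). rewrite tg_mulV, tg_mul1. reflexivity. }
  rewrite <- (tg_mul1 G e) at 1. rewrite <- (tg_mulV G e) at 1.
  rewrite <- tg_assoc, He. apply tg_mulV.
Qed.

Lemma mulg1 (G : TopGroup) (x : G) : tg_mul x tg_one = x.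
Proof. rewrite <- (tg_mulV G x), tg_assoc, mulgV, tg_mul1. reflexivity. Qed.

Lemma invgK (G : TopGroup) (x : G) : tg_inv (tg_inv x) = x.
Proof. apply (@mulg_cancel G (tg_inv x)). rewrite mulgV, tg_mulV. reflexivity. Qed.

Lemma invgM (G : TopGroup) (a b : G) : tg_inv (tg_mul a b) = tg_mul (tg_inv b) (tg_inv a).
Proof.
  apply (@mulg_cancel G (tg_mul a b)). rewrite mulgV.
  rewrite <- tg_assoc, (tg_assoc G b), mulgV, tg_mul1, mulgV. reflexivity.
Qed.

Lemma invg1 (G : TopGroup) : tg_inv (tg_one : G) = tg_one.
Proof. rewrite <- (tg_mul1 G (tg_inv tg_one)). apply mulgV. Qed.

Lemma open_rmul (G : TopGroup) (k : G) (W : set G) :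
  open (tg_top G) W -> open (tg_top G) (fun u => W (tg_mul u k)).
Proof.
  intros HW; apply open_local; intros x Hx.
  destruct (tg_mul_cont G x k W HW Hx) as [U [V [HU [HV [Ux [Vk H]]]]]].
  exists U; split; [exact HU|split; [exact Ux|]]. intros z Uz; apply H; auto.
Qed.

Lemma open_lmul (G : TopGroup) (k : G) (W : set G) :
  open (tg_top G) W -> open (tg_top G) (fun u => W (tg_mul k u)).
Proof.
  intros HW; apply open_local; intros x Hx.
  destruct (tg_mul_cont G k x W HW Hx) as [U [V [HU [HV [Ux [Vk H]]]]]].
  exists V; split; [exact HV|split; [exact Vk|]]. intros z Vz; apply H; auto.
Qed.

Lemma open_inv (G : TopGroup) (W : set G) :
  open (tg_top G) W -> open (tg_top G) (fun u => W (tg_inv u)).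
Proof. apply tg_inv_cont. Qed.

Lemma four_nbhd (G : TopGroup) (y : G) (V : set G) :
  open (tg_top G) V -> V y -> exists T, open (tg_top G) T /\ T tg_one /\
   forall t1 t2 t3 t4, T t1 -> T t2 -> T t3 -> T t4 ->
     V (tg_mul (tg_mul (tg_mul t1 (tg_inv t2)) y) (tg_mul (tg_inv t3) t4)).
Proof.
  intros HV Vy.
  assert (H0 : V (tg_mul (tg_mul (tg_mul tg_one (tg_inv tg_one)) y) (tg_mul (tg_inv tg_one) tg_one))).
  { rewrite invg1, !tg_mul1, mulg1. exact Vy. }
  destruct (tg_mul_cont G _ _ V HV H0) as [U1 [U2 [HU1 [HU2 [U1x [U2x H12]]]]]].
  destruct (tg_mul_cont G _ _ U1 HU1 U1x) as [U3 [U4 [HU3 [HU4 [U3x [U4x H34]]]]]].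
  destruct (tg_mul_cont G _ _ U3 HU3 U3x) as [U5 [U6 [HU5 [HU6 [U5x [U6x H56]]]]]].
  destruct (tg_mul_cont G _ _ U2 HU2 U2x) as [U7 [U8 [HU7 [HU8 [U7x [U8x H78]]]]]].
  exists (fun t => (U5 t /\ U6 (tg_inv t)) /\ (U7 (tg_inv t) /\ U8 t)).
  split.
  - apply (open_inter (tg_top G)); apply (open_inter (tg_top G)); auto using open_inv.
  - split; [tauto|].
    intros t1 t2 t3 t4 H1 H2 H3 H4. apply H12.
    + apply H34; [apply H56|]; tauto.
    + apply H78; tauto.
Qed.

Definition full {T} : set T := fun _ => True.

Fixpoint WW {S0 T0} (s : strategy T0) (phi : set S0 -> set T0) (U : nat -> set S0) (n : nat)
  : list (set T0) :=
  match n with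
  | 0 => [phi (U 0)]
  | S n' => let l := WW s phi U n' in let v := s l in
            l ++ [v; fun t => phi (U (2*n'+2)) t /\ v t]
  end.

Definition Wf {S0 T0} (s : strategy T0) (phi : set S0 -> set T0) (U : nat -> set S0) (k : nat) :=
  nth k (WW s phi U k) full.

Definition sigma {S0 T0} (s : strategy T0) (phi : set S0 -> set T0) (psi : set T0 -> set S0)
  (h : list (set S0)) : set S0 :=
  let U := fun k => nth k h full in let n := Nat.div2 (length h) in
  fun x => psi (s (WW s phi U n)) x /\ U (2*n) x.

Lemma WW_len {S0 T0} s (phi : set S0 -> set T0) U n : length (WW s phi U n) = 2*n+1.
Proof. induction n; simpl; auto. rewrite length_app, IHn; simpl; lia. Qed.

Lemma WW_S {S0 T0} s (phi : set S0 -> set T0) U n :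
  WW s phi U (S n) = WW s phi U n ++ [s (WW s phi U n); fun t => phi (U (2*n+2)) t /\ s (WW s phi U n) t].
Proof. reflexivity. Qed.

Lemma WW_prefix {S0 T0} s (phi : set S0 -> set T0) U n m : n <= m ->
  exists r, WW s phi U m = WW s phi U n ++ r.
Proof.
  induction 1.
  - exists []; rewrite app_nil_r; auto.
  - destruct IHle as [r Hr]. simpl. rewrite Hr. eexists. rewrite <- app_assoc. reflexivity.
Qed.

Lemma WW_nth {S0 T0} s (phi : set S0 -> set T0) U n k : k < 2*n+1 ->
  nth k (WW s phi U n) full = Wf s phi U k.
Proof.
  intros Hk. unfold Wf.
  destruct (WW_prefix s phi U n (max n k)) as [r1 H1]; [lia|].
  destruct (WW_prefix s phi U k (max n k)) as [r2 H2]; [lia|].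
  assert (E : nth k (WW s phi U (max n k)) full = nth k (WW s phi U n) full).
  { rewrite H1, app_nth1; auto. rewrite WW_len; lia. }
  assert (E2 : nth k (WW s phi U (max n k)) full = nth k (WW s phi U k) full).
  { rewrite H2, app_nth1; auto. rewrite WW_len; lia. }
  congruence.
Qed.

Lemma hist_nth {T} (U : nat -> set T) m k d : k < m -> nth k (history U m) d = U k.
Proof.
  intros Hk. unfold history. rewrite (nth_indep _ d (U 0)).
  - rewrite map_nth, seq_nth; auto.
  - rewrite length_map, length_seq; auto.
Qed.

Lemma hist_len {T} (U : nat -> set T) m : length (history U m) = m.
Proof. unfold history; rewrite length_map, length_seq; auto. Qed.

Lemma WW_hist {S0 T0} s (phi : set S0 -> set T0) U n :
  WW s phi U n = history (Wf s phi U) (2*n+1).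
Proof.
  apply nth_ext with (d := full) (d' := full).
  - rewrite WW_len, hist_len; auto.
  - intros k Hk. rewrite WW_len in Hk. rewrite hist_nth by lia. apply WW_nth; auto.
Qed.

Lemma Wf_odd {S0 T0} s (phi : set S0 -> set T0) U n :
  Wf s phi U (2*n+1) = s (WW s phi U n).
Proof.
  rewrite <- (WW_nth s phi U (S n)) by lia. rewrite WW_S.
  rewrite app_nth2; rewrite WW_len; [|lia].
  replace (2*n+1 - (2*n+1)) with 0 by lia. reflexivity.
Qed.

Lemma Wf_even {S0 T0} s (phi : set S0 -> set T0) U n :
  Wf s phi U (2*n+2) = fun t => phi (U (2*n+2)) t /\ s (WW s phi U n) t.
Proof.
  rewrite <- (WW_nth s phi U (S n)) by lia. rewrite WW_S.
  rewrite app_nth2; rewrite WW_len; [|lia].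
  replace (2*n+2 - (2*n+1)) with 1 by lia. reflexivity.
Qed.

Lemma Wf_0 {S0 T0} s (phi : set S0 -> set T0) U : Wf s phi U 0 = phi (U 0).
Proof. reflexivity. Qed.

Lemma Wf_follows {S0 T0} s (phi : set S0 -> set T0) U k :
  Wf s phi U (2*k+1) = s (history (Wf s phi U) (2*k+1)).
Proof. rewrite Wf_odd, WW_hist. reflexivity. Qed.

Lemma WW_ext {S0 T0} s (phi : set S0 -> set T0) U U' n :
  (forall k, k <= 2*n -> U k = U' k) -> WW s phi U n = WW s phi U' n.
Proof.
  induction n; intros H.
  - simpl. rewrite H; auto; lia.
  - rewrite !WW_S. rewrite IHn by (intros; apply H; lia). rewrite (H (2*n+2)) by lia. reflexivity.
Qed.

Lemma sigma_hist {S0 T0} s (phi : set S0 -> set T0) psi U n x :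
  sigma s phi psi (history U (2*n+1)) x <-> psi (Wf s phi U (2*n+1)) x /\ U (2*n) x.
Proof.
  unfold sigma. rewrite hist_len.
  replace (2*n+1) with (S (2*n)) by lia. rewrite Nat.div2_succ_double.
  replace (S (2*n)) with (2*n+1) by lia.
  rewrite (WW_ext s phi (fun k => nth k (history U (2*n+1)) full) U n).
  - rewrite Wf_odd, hist_nth by lia. tauto.
  - intros k Hk. apply hist_nth; lia.
Qed.

Lemma transfer {S0 T0} (tS : Topology S0) (tT : Topology T0) (s : strategy T0)
  (phi : set S0 -> set T0) (psi : set T0 -> set S0) :
  winning_N tT s ->
  (forall A, open tS A -> open tT (phi A)) ->
  (forall A, open tS A -> (exists x, A x) -> exists t, phi A t) ->
  (forall A V, open tS A -> open tT V -> (exists x, A x) -> (forall x, A x -> psi V x) ->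
     exists t, phi A t /\ V t) ->
  (forall A V, open tS A -> open tT V -> (exists t, V t) -> (forall t, V t -> phi A t) ->
     open tS (psi V) /\ exists x, psi V x /\ A x) ->
  (forall W : nat -> set T0, (forall k, open tT (W k)) -> (exists t, forall k, W k t) ->
     exists x, forall k, psi (W k) x /\
       forall A, open tS A -> (forall t, W k t -> phi A t) -> A x) ->
  winning_N tS (sigma s phi psi).
Proof.
  intros [Hs1 Hs2] C1 C0 C2 C3 C4.
  assert (K : forall U n, (forall k, k <= 2*n -> legal_move tS U k) ->
             follows_upto (sigma s phi psi) U (2*n+1) ->
             forall m, m <= n ->
             (forall k, k <= 2*m -> legal_move tT (Wf s phi U) k) /\
             (forall t, Wf s phi U (2*m) t -> phi (U (2*m)) t)).
  { intros U n HL HF m. induction m; intros Hm.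
    - assert (HU0 := HL 0 (Nat.le_0_l _)). destruct HU0 as [HU0o [HU0n _]].
      split.
      + intros k Hk. replace k with 0 by lia. unfold legal_move. rewrite Wf_0.
        split; [auto|split; [auto|intros; lia]].
      + intros t Ht. exact Ht.
    - destruct IHm as [IL IP]; [lia|].
      assert (Hfol : follows_upto s (Wf s phi U) (2*m+1)).
      { intros k _. apply Wf_follows. }
      destruct (Hs1 (Wf s phi U) m IL Hfol) as [Vo [Vn Vs]].
            assert (E1 : Wf s phi U (2*m+1) = s (history (Wf s phi U) (2*m+1))) by apply Wf_follows.
      assert (L1 : legal_move tT (Wf s phi U) (2*m+1)).
      { split; [rewrite E1; exact Vo|split; [rewrite E1; exact Vn|]].
        intros x _ Hx. replace (2*m+1-1) with (2*m) by lia. apply Vs. rewrite <- E1. exact Hx. }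
      assert (LU2 := HL (2*m+2) ltac:(lia)). destruct LU2 as [U2o [U2n U2s]].
      assert (E2 : Wf s phi U (2*m+2) = fun t => phi (U (2*m+2)) t /\ Wf s phi U (2*m+1) t).
      { rewrite Wf_even, Wf_odd. reflexivity. }
      assert (L2 : legal_move tT (Wf s phi U) (2*m+2)).
      { unfold legal_move. rewrite E2. split; [apply open_inter; auto; apply L1|split].
        - apply C2; auto. apply L1.
          intros x Hx. assert (H1 := U2s x ltac:(lia) Hx).
          replace (2*m+2-1) with (2*m+1) in H1 by lia.
          rewrite (HF m ltac:(lia)) in H1. apply sigma_hist in H1. apply H1.
        - intros x _ [_ Hx]. replace (2*m+2-1) with (2*m+1) by lia. exact Hx. }
      split.
      + intros k Hk.
        destruct (le_lt_dec k (2*m)) as [Hk'|Hk']; [apply IL; auto|].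
        destruct (Nat.eq_dec k (2*m+1)) as [->|Hk'']; [exact L1|].
        replace k with (2*m+2) by lia. exact L2.
      + replace (2 * S m) with (2*m+2) by lia. rewrite E2. intros t [Ht _]; exact Ht. }
  split.
  - intros U n HL HF. simpl.
    destruct (K U n HL HF n (le_n _)) as [IL IP].
    assert (Hfol : follows_upto s (Wf s phi U) (2*n+1)).
    { intros k _. apply Wf_follows. }
    destruct (Hs1 (Wf s phi U) n IL Hfol) as [Vo [Vn Vs]].
    assert (E1 : Wf s phi U (2*n+1) = s (history (Wf s phi U) (2*n+1))) by apply Wf_follows.
    rewrite <- E1 in Vo, Vn, Vs.
    destruct (HL (2*n) (le_n _)) as [Uo _].
    destruct (C3 (U (2*n)) (Wf s phi U (2*n+1)) Uo Vo Vn (fun t Ht => IP t (Vs t Ht))) as [Po [x [Px Ux]]].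
    split; [|split].
    + eapply open_ext; [intro z; symmetry; apply sigma_hist|]. apply open_inter; auto.
    + exists x. apply sigma_hist. auto.
    + intros z Hz. apply sigma_hist in Hz. apply Hz.
  - intros U HL HF.
    assert (HF' : forall n, follows_upto (sigma s phi psi) U (2*n+1)).
    { intros n k _. apply HF. }
    assert (WL : forall k, legal_move tT (Wf s phi U) k).
    { intros k. apply (K U k (fun k' _ => HL k') (HF' k) k (le_n _)). lia. }
    destruct (Hs2 (Wf s phi U) WL (fun n => Wf_follows s phi U n)) as [t Ht].
    destruct (C4 (Wf s phi U) (fun k => proj1 (WL k)) (ex_intro _ t Ht)) as [x Hx].
    exists x. intros k. destruct (Nat.Even_or_Odd k) as [[m ->]|[m ->]].
    + apply (proj2 (Hx (2*m))). apply (HL (2*m)).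
      apply (K U m (fun k' _ => HL k') (HF' m) m (le_n _)).
    + rewrite HF. apply sigma_hist. split; [apply Hx|].
      apply (proj2 (Hx (2*m))). apply (HL (2*m)).
      apply (K U m (fun k' _ => HL k') (HF' m) m (le_n _)).
Qed.

Definition Ext {X Y : TopGroup} (j : X -> Y) (V : set X) : set Y :=
  fun u => exists B, open (tg_top Y) B /\ B u /\ forall x, B (j x) -> V x.

Lemma Ext_open {X Y : TopGroup} (j : X -> Y) V : open (tg_top Y) (Ext j V).
Proof.
  apply open_ext with (A := fun u => exists B, (open (tg_top Y) B /\ forall x, B (j x) -> V x) /\ B u).
  - intro u; split.
    + intros [B [[HB HBV] Bu]]; exists B; auto.
    + intros [B [HB [Bu HBV]]]; exists B; auto.
  - apply open_union. intros B [HB _]; exact HB.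
Qed.

Lemma Ext_j {X Y : TopGroup} (j : X -> Y) V x : Ext j V (j x) -> V x.
Proof. intros [B [_ [Bx H]]]; auto. Qed.

Lemma j_Ext {X Y : TopGroup} (j : X -> Y) V x : is_raikov_completion X Y j ->
  open (tg_top X) V -> V x -> Ext j V (j x).
Proof.
  intros [_ [_ [_ [Hemb _]]]] HV Vx.
  destruct (Hemb V HV) as [B [HB HVB]].
  exists B; split; [auto|split]; [apply HVB; auto|]. intros z Bz; apply HVB; auto.
Qed.

Lemma choquet_up (X Y : TopGroup) (j : X -> Y) : is_raikov_completion X Y j ->
  choquet (tg_top X) -> choquet (tg_top Y).
Proof.
  intros Hj [s Hs]. pose proof Hj as [Hhom [Hinj [Hcont [Hemb [Hdense Hcomp]]]]].
  exists (sigma s (fun U x => U (j x)) (Ext j)).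
  apply (transfer (tg_top Y) (tg_top X) s).
  - exact Hs.
  - intros A HA. apply Hcont; exact HA.
  - intros A HA [y Ay]. apply Hdense; eauto.
  - intros A V HA HV Hne HAV. destruct (Hdense A HA Hne) as [x Ax].
    exists x; split; auto. apply (Ext_j j). apply HAV; auto.
  - intros A V HA HV [t Vt] HVA. split; [apply Ext_open|].
    exists (j t). split; [apply j_Ext; auto|]. apply HVA; auto.
  - intros W HW [t Ht]. exists (j t). intros k. split.
    + apply j_Ext; auto.
    + intros A HA HWA. apply HWA; auto.
Qed.

Lemma choquet_down (X Y : TopGroup) (j : X -> Y) : is_raikov_completion X Y j ->
  choquet (tg_top Y) -> Gdelta_dense (tg_top Y) (fun y => exists x, j x = y) ->
  choquet (tg_top X).
Proof.
  intros Hj [s Hs] HG. pose proof Hj as [Hhom [Hinj [Hcont [Hemb [Hdense Hcomp]]]]].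
  exists (sigma s (Ext j) (fun W x => W (j x))).
  apply (transfer (tg_top X) (tg_top Y) s).
  - exact Hs.
  - intros A _. apply Ext_open.
  - intros A HA [x Ax]. exists (j x). apply j_Ext; auto.
  - intros A V HA HV [x Ax] HAV. exists (j x). split; [apply j_Ext; auto|]. apply HAV; auto.
  - intros A V HA HV Hne HVA. split; [apply Hcont; auto|].
    destruct (Hdense V HV Hne) as [x Vx]. exists x; split; auto.
    apply (Ext_j j). apply HVA; auto.
  - intros W HW Hne. destruct (HG W HW Hne) as [y [[x <-] Hx]].
    exists x. intros k. split; auto.
    intros A HA HWA. apply (Ext_j j). apply HWA; auto.
Qed.

Lemma mulKg (G : TopGroup) (a z : G) : tg_mul (tg_inv a) (tg_mul a z) = z.
Proof. rewrite tg_assoc, tg_mulV, tg_mul1. reflexivity. Qed.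
Lemma mulKVg (G : TopGroup) (a z : G) : tg_mul a (tg_mul (tg_inv a) z) = z.
Proof. rewrite tg_assoc, mulgV, tg_mul1. reflexivity. Qed.

Lemma alg6 (G : TopGroup) (ja jb c d al y : G) :
  tg_mul (tg_mul (tg_mul (tg_mul ja (tg_inv c)) (tg_inv (tg_mul al (tg_inv c)))) y)
         (tg_mul (tg_inv (tg_mul (tg_inv d) (tg_mul (tg_inv al) y))) (tg_mul (tg_inv d) jb))
  = tg_mul ja jb.
Proof.
  rewrite !invgM, !invgK. rewrite <- !tg_assoc.
  rewrite (mulKg G c), (mulKVg G y), (mulKg G al), (mulKVg G d). reflexivity.
Qed.

Lemma alg_a (G : TopGroup) (a y : G) : tg_mul y (tg_inv (tg_mul (tg_inv a) y)) = a.
Proof. rewrite invgM, invgK. apply mulKVg. Qed.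

Lemma alg_b (G : TopGroup) (a y : G) : tg_mul (tg_inv (tg_mul y (tg_inv a))) y = a.
Proof. rewrite invgM, invgK, <- tg_assoc, tg_mulV, mulg1. reflexivity. Qed.

Definition st_t (X Y : TopGroup) := (list (set X) * list (set X) * set Y * set Y)%type.
Definition shA {X Y : TopGroup} (st : st_t X Y) := fst (fst (fst st)).
Definition shB {X Y : TopGroup} (st : st_t X Y) := snd (fst (fst st)).
Definition sP {X Y : TopGroup} (st : st_t X Y) := snd (fst st).
Definition sQ {X Y : TopGroup} (st : st_t X Y) := snd st.


Definition c1 {X Y : TopGroup} (y : Y) (st : st_t X Y) : Y :=
  epsilon (inhabits y) (fun c => sP st c /\ sQ st (tg_mul (tg_inv c) y)).
Definition P1 {X Y : TopGroup} (y : Y) (Tn : set Y) (st : st_t X Y) : set Y :=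
  fun u => sP st u /\ (sQ st (tg_mul (tg_inv u) y) /\ Tn (tg_mul u (tg_inv (c1 y st)))).
Definition A1 {X Y : TopGroup} (j : X -> Y) (y : Y) Tn (st : st_t X Y) : set X :=
  fun x => P1 y Tn st (j x).
Definition A2 {X Y : TopGroup} (j : X -> Y) (s : strategy X) (y : Y) Tn (st : st_t X Y) : set X :=
  s (shA st ++ [A1 j y Tn st]).
Definition P2 {X Y : TopGroup} (j : X -> Y) s (y : Y) Tn (st : st_t X Y) : set Y :=
  fun u => Ext j (A2 j s y Tn st) u /\ P1 y Tn st u.
Definition d1 {X Y : TopGroup} (j : X -> Y) s (y : Y) Tn (st : st_t X Y) : Y :=
  epsilon (inhabits y) (fun d => sQ st d /\ P2 j s y Tn st (tg_mul y (tg_inv d))).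
Definition Q1 {X Y : TopGroup} (j : X -> Y) s (y : Y) Tn (st : st_t X Y) : set Y :=
  fun u => sQ st u /\ (P2 j s y Tn st (tg_mul y (tg_inv u)) /\ Tn (tg_mul (tg_inv (d1 j s y Tn st)) u)).
Definition B1 {X Y : TopGroup} (j : X -> Y) s (y : Y) Tn (st : st_t X Y) : set X :=
  fun x => Q1 j s y Tn st (j x).
Definition B2 {X Y : TopGroup} (j : X -> Y) s (y : Y) Tn (st : st_t X Y) : set X :=
  s (shB st ++ [B1 j s y Tn st]).
Definition Q2 {X Y : TopGroup} (j : X -> Y) s (y : Y) Tn (st : st_t X Y) : set Y :=
  fun u => Ext j (B2 j s y Tn st) u /\ Q1 j s y Tn st u.
Definition step {X Y : TopGroup} (j : X -> Y) s (y : Y) Tn (st : st_t X Y) : st_t X Y :=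
  (shA st ++ [A1 j y Tn st; A2 j s y Tn st], shB st ++ [B1 j s y Tn st; B2 j s y Tn st],
   P2 j s y Tn st, Q2 j s y Tn st).
Fixpoint state {X Y : TopGroup} (j : X -> Y) s (y : Y) (T : nat -> set Y) (n : nat) : st_t X Y :=
  match n with
  | 0 => ([], [], full, full)
  | S n' => step j s y (T n') (state j s y T n')
  end.
Definition Aplay {X Y : TopGroup} (j : X -> Y) s (y : Y) T (k : nat) : set X :=
  nth k (shA (state j s y T (S k))) full.
Definition Bplay {X Y : TopGroup} (j : X -> Y) s (y : Y) T (k : nat) : set X :=
  nth k (shB (state j s y T (S k))) full.

Lemma shA_step {X Y : TopGroup} (j : X -> Y) s y Tn (st : st_t X Y) :
  shA (step j s y Tn st) = shA st ++ [A1 j y Tn st; A2 j s y Tn st] /\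
  shB (step j s y Tn st) = shB st ++ [B1 j s y Tn st; B2 j s y Tn st] /\
  sP (step j s y Tn st) = P2 j s y Tn st /\ sQ (step j s y Tn st) = Q2 j s y Tn st.
Proof. repeat split. Qed.

Lemma state_S {X Y : TopGroup} (j : X -> Y) s y T n :
  state j s y T (S n) = step j s y (T n) (state j s y T n).
Proof. reflexivity. Qed.

Lemma state_len {X Y : TopGroup} (j : X -> Y) s y T n :
  length (shA (state j s y T n)) = 2*n /\ length (shB (state j s y T n)) = 2*n.
Proof.
  induction n; [simpl; auto|]. rewrite state_S.
  destruct (shA_step j s y (T n) (state j s y T n)) as [-> [-> _]].
  rewrite !length_app, (proj1 IHn), (proj2 IHn); simpl; lia.
Qed.

Lemma state_prefix {X Y : TopGroup} (j : X -> Y) s y T n m : n <= m ->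
  (exists r, shA (state j s y T m) = shA (state j s y T n) ++ r) /\
  (exists r, shB (state j s y T m) = shB (state j s y T n) ++ r).
Proof.
  induction 1.
  - split; exists []; rewrite app_nil_r; auto.
  - destruct IHle as [[r1 H1] [r2 H2]]. rewrite state_S.
    destruct (shA_step j s y (T m) (state j s y T m)) as [-> [-> _]].
    rewrite H1, H2. split; eexists; rewrite <- app_assoc; reflexivity.
Qed.

Lemma Aplay_nth {X Y : TopGroup} (j : X -> Y) s y T n k : k < 2*n ->
  nth k (shA (state j s y T n)) full = Aplay j s y T k /\
  nth k (shB (state j s y T n)) full = Bplay j s y T k.
Proof.
  intros Hk. unfold Aplay, Bplay.
  destruct (state_prefix j s y T n (max n (S k))) as [[r1 H1] [r2 H2]]; [lia|].
  destruct (state_prefix j s y T (S k) (max n (S k))) as [[r3 H3] [r4 H4]]; [lia|].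
  pose proof (state_len j s y T n) as [L1 L2].
  pose proof (state_len j s y T (S k)) as [L3 L4].
  split.
  - rewrite <- (app_nth1 _ r1) by lia. rewrite <- H1, H3, app_nth1 by lia. reflexivity.
  - rewrite <- (app_nth1 _ r2) by lia. rewrite <- H2, H4, app_nth1 by lia. reflexivity.
Qed.

Lemma Aplay_step {X Y : TopGroup} (j : X -> Y) s y T n :
  Aplay j s y T (2*n) = A1 j y (T n) (state j s y T n) /\
  Aplay j s y T (2*n+1) = A2 j s y (T n) (state j s y T n) /\
  Bplay j s y T (2*n) = B1 j s y (T n) (state j s y T n) /\
  Bplay j s y T (2*n+1) = B2 j s y (T n) (state j s y T n).
Proof.
  pose proof (state_len j s y T n) as [L1 L2].
  destruct (Aplay_nth j s y T (S n) (2*n)) as [E1 E2]; [lia|].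
  destruct (Aplay_nth j s y T (S n) (2*n+1)) as [E3 E4]; [lia|].
  rewrite <- E1, <- E2, <- E3, <- E4. rewrite state_S.
  destruct (shA_step j s y (T n) (state j s y T n)) as [-> [-> _]].
  rewrite !app_nth2 by lia. rewrite L1, L2.
  replace (2*n - 2*n) with 0 by lia. replace (2*n+1 - 2*n) with 1 by lia.
  repeat split.
Qed.

Lemma Aplay_hist {X Y : TopGroup} (j : X -> Y) s y T n :
  history (Aplay j s y T) (2*n+1) = shA (state j s y T n) ++ [A1 j y (T n) (state j s y T n)] /\
  history (Bplay j s y T) (2*n+1) = shB (state j s y T n) ++ [B1 j s y (T n) (state j s y T n)].
Proof.
  pose proof (state_len j s y T n) as [L1 L2].
  pose proof (Aplay_step j s y T n) as [S1 [_ [S3 _]]].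
  split; apply nth_ext with (d := full) (d' := full);
    try (rewrite hist_len, length_app; simpl; lia);
    intros k Hk; rewrite hist_len in Hk; rewrite hist_nth by lia.
  - destruct (Nat.eq_dec k (2*n)) as [->|Hne].
    + rewrite app_nth2 by lia. rewrite L1, Nat.sub_diag. exact S1.
    + rewrite app_nth1 by lia. symmetry; apply Aplay_nth; lia.
  - destruct (Nat.eq_dec k (2*n)) as [->|Hne].
    + rewrite app_nth2 by lia. rewrite L2, Nat.sub_diag. exact S3.
    + rewrite app_nth1 by lia. symmetry; apply Aplay_nth; lia.
Qed.

Lemma Aplay_follow {X Y : TopGroup} (j : X -> Y) s y T n :
  Aplay j s y T (2*n+1) = s (history (Aplay j s y T) (2*n+1)) /\
  Bplay j s y T (2*n+1) = s (history (Bplay j s y T) (2*n+1)).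
Proof.
  pose proof (Aplay_step j s y T n) as [_ [S2 [_ S4]]].
  pose proof (Aplay_hist j s y T n) as [H1 H2].
  rewrite S2, S4, H1, H2. split; reflexivity.
Qed.

Lemma inv_all {X Y : TopGroup} (j : X -> Y) s (y : Y) (T : nat -> set Y) :
  is_raikov_completion X Y j -> winning_N (tg_top X) s ->
  (forall n, open (tg_top Y) (T n) /\ T n tg_one) ->
  forall n,
   open (tg_top Y) (sP (state j s y T n)) /\ open (tg_top Y) (sQ (state j s y T n)) /\
   (exists c, sP (state j s y T n) c /\ sQ (state j s y T n) (tg_mul (tg_inv c) y)) /\
   (forall x, sP (state j s y T n) (j x) -> nth (2*n-1) (shA (state j s y T n)) full x) /\
   (forall x, sQ (state j s y T n) (j x) -> nth (2*n-1) (shB (state j s y T n)) full x) /\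
   (forall k, k < 2*n -> legal_move (tg_top X) (Aplay j s y T) k /\
                         legal_move (tg_top X) (Bplay j s y T) k).
Proof.
  intros Hj [Hs1 Hs2] HT.
  pose proof Hj as [Hhom [Hinj [Hcont [Hemb [Hdense Hcomp]]]]].
  induction n.
  - simpl. unfold sP, sQ, shA, shB; simpl.
    split; [apply open_full|split; [apply open_full|split]].
    + exists y; split; exact I.
    + split; [intros; exact I|split; [intros; exact I|intros; lia]].
  - destruct IHn as [HPo [HQo [[c0 Hc0] [HPA [HQB HL]]]]].
    rewrite state_S.
    set (st := state j s y T n) in *.
    destruct (shA_step j s y (T n) st) as [-> [-> [-> ->]]].
    destruct (HT n) as [HTo HT1].
    pose proof (state_len j s y T n) as [LA LB]. fold st in LA, LB.
    pose proof (Aplay_step j s y T n) as [SA1 [SA2 [SB1 SB2]]]. fold st in SA1, SA2, SB1, SB2.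
    assert (cspec : sP st (c1 y st) /\ sQ st (tg_mul (tg_inv (c1 y st)) y)).
    { unfold c1. apply epsilon_spec. exists c0; exact Hc0. }
    assert (P1o : open (tg_top Y) (P1 y (T n) st)).
    { unfold P1. apply open_inter; [exact HPo|apply open_inter].
      - apply (open_inv Y (fun v => sQ st (tg_mul v y))). apply open_rmul. exact HQo.
      - apply (open_rmul Y (tg_inv (c1 y st)) (T n)). exact HTo. }
    assert (P1c : P1 y (T n) st (c1 y st)).
    { unfold P1. split; [apply cspec|split; [apply cspec|]]. rewrite mulgV. exact HT1. }
    assert (A1o : open (tg_top X) (A1 j y (T n) st)).
    { unfold A1. apply Hcont. exact P1o. }
    assert (A1n : exists x, A1 j y (T n) st x).
    { apply Hdense; [exact P1o|exists (c1 y st); exact P1c]. }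
    assert (LA0 : legal_move (tg_top X) (Aplay j s y T) (2*n)).
    { unfold legal_move. rewrite SA1. split; [exact A1o|split; [exact A1n|]].
      intros x Hn Hx. rewrite <- (proj1 (Aplay_nth j s y T n (2*n-1) ltac:(lia))).
      apply HPA. apply Hx. }
    assert (Hfa : follows_upto s (Aplay j s y T) (2*n+1)).
    { intros k _. apply Aplay_follow. }
    destruct (Hs1 (Aplay j s y T) n) as [A2o [A2n A2s]].
    { intros k Hk. destruct (Nat.eq_dec k (2*n)) as [->|Hne]; [exact LA0|apply HL; lia]. }
    { exact Hfa. }
    rewrite <- (proj1 (Aplay_follow j s y T n)) in A2o, A2n, A2s.
    rewrite SA2 in A2o, A2n, A2s. rewrite SA1 in A2s.
    assert (LA1 : legal_move (tg_top X) (Aplay j s y T) (2*n+1)).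
    { unfold legal_move. rewrite SA2. split; [exact A2o|split; [exact A2n|]].
      intros x _ Hx. replace (2*n+1-1) with (2*n) by lia. rewrite SA1. apply A2s; exact Hx. }
    assert (P2o : open (tg_top Y) (P2 j s y (T n) st)).
    { unfold P2. apply open_inter; [apply Ext_open|exact P1o]. }
    assert (dspec : sQ st (d1 j s y (T n) st) /\
                    P2 j s y (T n) st (tg_mul y (tg_inv (d1 j s y (T n) st)))).
    { unfold d1. apply epsilon_spec. destruct A2n as [x2 Hx2].
      assert (H1 := A2s x2 Hx2). unfold A1, P1 in H1.
      exists (tg_mul (tg_inv (j x2)) y). split; [apply H1|].
      rewrite alg_a. split; [apply j_Ext; auto|]. apply A2s; exact Hx2. }
    assert (Q1o : open (tg_top Y) (Q1 j s y (T n) st)).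
    { unfold Q1. apply open_inter; [exact HQo|apply open_inter].
      - apply (open_inv Y (fun v => P2 j s y (T n) st (tg_mul y v))). apply open_lmul. exact P2o.
      - apply (open_lmul Y (tg_inv (d1 j s y (T n) st)) (T n)). exact HTo. }
    assert (Q1d : Q1 j s y (T n) st (d1 j s y (T n) st)).
    { unfold Q1. split; [apply dspec|split; [apply dspec|]]. rewrite tg_mulV. exact HT1. }
    assert (B1o : open (tg_top X) (B1 j s y (T n) st)).
    { unfold B1. apply Hcont. exact Q1o. }
    assert (B1n : exists x, B1 j s y (T n) st x).
    { apply Hdense; [exact Q1o|exists (d1 j s y (T n) st); exact Q1d]. }
    assert (LB0 : legal_move (tg_top X) (Bplay j s y T) (2*n)).
    { unfold legal_move. rewrite SB1. split; [exact B1o|split; [exact B1n|]].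
      intros x Hn Hx. rewrite <- (proj2 (Aplay_nth j s y T n (2*n-1) ltac:(lia))).
      apply HQB. apply Hx. }
    assert (Hfb : follows_upto s (Bplay j s y T) (2*n+1)).
    { intros k _. apply Aplay_follow. }
    destruct (Hs1 (Bplay j s y T) n) as [B2o [B2n B2s]].
    { intros k Hk. destruct (Nat.eq_dec k (2*n)) as [->|Hne]; [exact LB0|apply HL; lia]. }
    { exact Hfb. }
    rewrite <- (proj2 (Aplay_follow j s y T n)) in B2o, B2n, B2s.
    rewrite SB2 in B2o, B2n, B2s. rewrite SB1 in B2s.
    assert (LB1 : legal_move (tg_top X) (Bplay j s y T) (2*n+1)).
    { unfold legal_move. rewrite SB2. split; [exact B2o|split; [exact B2n|]].
      intros x _ Hx. replace (2*n+1-1) with (2*n) by lia. rewrite SB1. apply B2s; exact Hx. }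
    split; [exact P2o|split; [unfold Q2; apply open_inter; [apply Ext_open|exact Q1o]|split]].
    + destruct B2n as [z Hz]. assert (H1 := B2s z Hz). unfold B1, Q1 in H1.
      exists (tg_mul y (tg_inv (j z))). split; [apply H1|].
      rewrite alg_b. split; [apply j_Ext; auto|]. apply B2s; exact Hz.
    + replace (2 * S n - 1) with (2*n + 1) by lia.
      split; [|split].
      * intros x [Hx _]. rewrite app_nth2 by lia. rewrite LA.
        replace (2*n+1-2*n) with 1 by lia. simpl. apply (Ext_j j); exact Hx.
      * intros x [Hx _]. rewrite app_nth2 by lia. rewrite LB.
        replace (2*n+1-2*n) with 1 by lia. simpl. apply (Ext_j j); exact Hx.
      * intros k Hk. destruct (le_lt_dec (2*n) k) as [Hk'|Hk'].
        -- destruct (Nat.eq_dec k (2*n)) as [->|Hne]; [split; assumption|].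
           replace k with (2*n+1) by lia. split; assumption.
        -- apply HL; lia.
Qed.

Lemma gdelta (X Y : TopGroup) (j : X -> Y) : is_raikov_completion X Y j ->
  choquet (tg_top X) -> Gdelta_dense (tg_top Y) (fun y => exists x, j x = y).
Proof.
  intros Hj [s Hs] V HV [y Hy].
  pose proof Hj as [Hhom [Hinj [Hcont [Hemb [Hdense Hcomp]]]]].
  set (Pr := fun n (T : set Y) => open (tg_top Y) T /\ T tg_one /\
       forall t1 t2 t3 t4, T t1 -> T t2 -> T t3 -> T t4 ->
         V n (tg_mul (tg_mul (tg_mul t1 (tg_inv t2)) y) (tg_mul (tg_inv t3) t4))).
  set (T := fun n => epsilon (inhabits (full : set Y)) (Pr n)).
  assert (HT : forall n, Pr n (T n)).
  { intro n. unfold T. apply epsilon_spec. apply four_nbhd; auto. }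
  pose proof (inv_all j s y T Hj Hs (fun n => conj (proj1 (HT n)) (proj1 (proj2 (HT n))))) as Inv.
  destruct Hs as [Hs1 Hs2].
  assert (LA : forall k, legal_move (tg_top X) (Aplay j s y T) k /\
                         legal_move (tg_top X) (Bplay j s y T) k).
  { intro k. apply (Inv (S k)). lia. }
  destruct (Hs2 (Aplay j s y T) (fun k => proj1 (LA k))
                (fun n => proj1 (Aplay_follow j s y T n))) as [a Ha].
  destruct (Hs2 (Bplay j s y T) (fun k => proj2 (LA k))
                (fun n => proj2 (Aplay_follow j s y T n))) as [b Hb].
  exists (j (tg_mul a b)). split; [eauto|]. intro n. rewrite Hhom.
  destruct (Inv (S n)) as [_ [_ [[al [Hal1 Hal2]] _]]].
  rewrite state_S in Hal1, Hal2.
  set (st := state j s y T n) in *.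
  destruct (shA_step j s y (T n) st) as [_ [_ [E1 E2]]]. rewrite E1 in Hal1. rewrite E2 in Hal2.
  pose proof (Aplay_step j s y T n) as [SA1 [_ [SB1 _]]]. fold st in SA1, SB1.
  assert (ja : A1 j y (T n) st a) by (rewrite <- SA1; apply Ha).
  assert (jb : B1 j s y (T n) st b) by (rewrite <- SB1; apply Hb).
  destruct (HT n) as [_ [_ H4]].
  specialize (H4 (tg_mul (j a) (tg_inv (c1 y st))) (tg_mul al (tg_inv (c1 y st)))
                 (tg_mul (tg_inv (d1 j s y (T n) st)) (tg_mul (tg_inv al) y))
                 (tg_mul (tg_inv (d1 j s y (T n) st)) (j b))).
  rewrite alg6 in H4. apply H4.
  - apply ja.
  - apply Hal1.
  - apply Hal2.
  - apply jb.
Qed.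

Theorem theorem4 (X Y : TopGroup) (j : X -> Y) (Hj : is_raikov_completion X Y j) :
  choquet (tg_top X) <->
  (choquet (tg_top Y) /\ Gdelta_dense (tg_top Y) (fun y => exists x, j x = y)).
Proof.
  split.
  - intro Hc. split; [apply (choquet_up X Y j Hj Hc)|apply (gdelta X Y j Hj Hc)].
  - intros [HcY HG]. apply (choquet_down X Y j Hj HcY HG).
Qed.
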